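(* Let $M(\mathcal A)$ be the total space of a torus bundle $p\colon M(\mathcal A)\to S^1$ with monodromy $\mathcal A\in\mathrm{SL}(2,\mathbb Z)$, let $P$ be a spine of $M(\mathcal A)$, and let $F_t=p^{-1}(t)$ be any fiber. Then $K_t=P\cap F_t$ intersects every loop in $F_t$ representing a nonzero element of $\pi_1(F_t)\cong\mathbb Z^2$.
   Context: $M(\mathcal A)=T^2\times[0,1]/\big((x,1)\sim(\varphi(x),0)\big)$ with $\varphi$ a linear automorphism of $T^2$ inducing $\mathcal A$; $p$ is the projection to the circle. A polyhedron $P$ in the closed 3-manifold $M(\mathcal A)$ is a spine if $M(\mathcal A)\setminus P$ is an open 3-cell. *)

(* Defs.v *)
From HB Require Import structures.
From Stdlib Require Import Relations.
From mathcomp Require Import all_boot all_order all_algebra generic_quotient.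
From mathcomp Require Import all_classical all_reals all_analysis.
Set Implicit Arguments. Unset Strict Implicit. Unset Printing Implicit Defensive.
Import Order.TTheory GRing.Theory Num.Theory.
Import numFieldTopology.Exports numFieldNormedType.Exports.
Local Open Scope classical_set_scope.
Local Open Scope ring_scope.
Local Open Scope quotient_scope.

Section TorusBundle.
Variable R : realType.
Variable A : 'M[int]_2.

(* T^2 x [0,1] / ((x,1) ~ (phi x, 0)) is the quotient of
   R^2 x R by the group generated by the integer translations of x and by
   tau : (x, s) |-> (phi x, s - 1), phi x = A x (column convention),
   i.e. x *m A^T for row vectors. *)
Notation cover := ((matrix R 1 2) * R)%type.

Definition Amx : 'M[R]_2 := map_mx (fun z : int => z%:~R) A.

Definition gen_move (a b : cover) : Prop :=
  (b = (a.1 + delta_mx 0 0, a.2)) \/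
  (b = (a.1 + delta_mx 0 1, a.2)) \/
  (b = (a.1 *m Amx^T, a.2 - 1)).

Definition bundle_rel_prop := clos_refl_sym_trans cover gen_move.

Definition bundle_rel : rel cover := fun a b => `[< bundle_rel_prop a b >].

Lemma bundle_rel_refl : reflexive bundle_rel.
Proof. by move=> a; apply/asboolP; apply: rst_refl. Qed.

Lemma bundle_rel_sym : symmetric bundle_rel.
Proof.
move=> a b; apply/asboolP/asboolP => h; exact: rst_sym.
Qed.

Lemma bundle_rel_trans : transitive bundle_rel.
Proof.
move=> b a c /asboolP h1 /asboolP h2; apply/asboolP; exact: rst_trans h1 h2.
Qed.

Definition bundle_equiv :=
  EquivRel bundle_rel bundle_rel_refl bundle_rel_sym bundle_rel_trans.

Definition bundle_quot := {eq_quot bundle_equiv}.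

Definition Mspace := quotient_topology bundle_quot.

Definition proj_M (z : cover) : Mspace := \pi_(bundle_quot) z.

(* The fiber F_t = p^{-1}(t), for t in S^1 = R/Z represented by t : R. *)
Definition fiber (t : R) : set Mspace :=
  [set m | exists z : cover, m = proj_M z /\ exists k : int, z.2 = t + k%:~R].

Definition conv_hull (vs : seq cover) : set cover :=
  [set z | exists w : nat -> R, (forall i, 0 <= w i) /\
     \sum_(i < size vs) w i = 1 /\
     z.1 = \sum_(i < size vs) w i *: (nth (0, 0) vs i).1 /\
     z.2 = \sum_(i < size vs) w i * (nth (0, 0) vs i).2].

(* A (compact) polyhedron in M(A): the image of a finite union of
   (convex hulls of finitely many points = finite unions of) simplices of
   the universal cover R^3, whose PL structure induces that of M(A). *)
Definition polyhedron (P : set Mspace) : Prop :=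
  exists L : seq (seq cover),
    P = [set m | exists2 vs, vs \in L & exists2 z, conv_hull vs z & m = proj_M z].

Definition open_3cell (U : set Mspace) : Prop :=
  exists (f : 'rV[R]_3 -> Mspace) (g : Mspace -> 'rV[R]_3),
    continuous f /\ {within U, continuous g} /\
    (forall y, U (f y)) /\ (forall y, g (f y) = y) /\
    (forall m, U m -> f (g m) = m).

Definition spine (P : set Mspace) : Prop := polyhedron P /\ open_3cell (~` P).

End TorusBundle.

Definition unit_square {R : realType} : set (R * R) :=
  [set p | p.1 \in `[0, 1]%R /\ p.2 \in `[0, 1]%R].

Definition loop_in {R : realType} {X : topologicalType} (S : set X) (gamma : R -> X) :=
  {within `[0, 1]%classic, continuous gamma} /\ gamma 0 = gamma 1 /\
  (forall u, u \in `[0, 1]%R -> S (gamma u)).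

(* gamma represents the trivial element of pi_1(S, gamma 0): a based
   homotopy in S from gamma to the constant loop. *)
Definition null_homotopic_in {R : realType} {X : topologicalType}
  (S : set X) (gamma : R -> X) :=
  exists H : R * R -> X,
    {within (@unit_square R), continuous H} /\
    (forall p, unit_square p -> S (H p)) /\
    (forall u, u \in `[0, 1]%R -> H (u, 0) = gamma u /\ H (u, 1) = gamma 0) /\
    (forall v, v \in `[0, 1]%R -> H (0, v) = gamma 0 /\ H (1, v) = gamma 0).

(* Main.v *)
Require Import Defs.
From HB Require Import structures.
From Stdlib Require Import Relations.
From mathcomp Require Import all_boot all_order all_algebra generic_quotient.
From mathcomp Require Import all_classical all_reals all_analysis.
From mathcomp Require Import lra.
Import Order.TTheory GRing.Theory Num.Theory.
Import numFieldTopology.Exports numFieldNormedType.Exports.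
Local Open Scope classical_set_scope.
Local Open Scope ring_scope.
Set Implicit Arguments. Unset Strict Implicit. Unset Printing Implicit Defensive.

Section Orbit.
Variable R : realType.
Variable A : 'M[int]_2.
Hypothesis hA : \det A = 1.

Local Notation cover := ((matrix R 1 2) * R)%type.

Definition Bz : 'M[int]_2 := A^T.

Lemma Bz_unit : Bz \is a GRing.unit.
Proof. by rewrite unitmxE /Bz det_tr hA unitr1. Qed.

Definition Bpow (n : int) : 'M[R]_2 := map_mx (fun z : int => z%:~R) (Bz ^ n).

Definition intmx m n (M : 'M[int]_(m, n)) : 'M[R]_(m, n) :=
  map_mx (fun z : int => z%:~R) M.

Lemma BpowD m n : Bpow (m + n) = Bpow m *m Bpow n.
Proof. by rewrite /Bpow (exprzDr Bz_unit) -mulmxE map_mxM. Qed.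

Lemma Bpow0 : Bpow 0 = 1%:M.
Proof. by rewrite /Bpow expr0z map_mx1. Qed.

Lemma Bpow1 : Bpow 1 = (Amx R A)^T.
Proof. by rewrite /Bpow expr1z /Bz /Amx map_trmx. Qed.

Definition deck (n : int) (w : 'rV[int]_2) (z : cover) : cover :=
  (z.1 *m Bpow n + intmx w, z.2 - n%:~R).

Lemma deck_comp m v n w z :
  deck m v (deck n w z) = deck (n + m) (w *m (Bz ^ m) + v) z.
Proof.
rewrite /deck /= /intmx; congr (_, _).
  by rewrite mulmxDl -mulmxA -BpowD map_mxD map_mxM addrA.
by rewrite intrD opprD addrA.
Qed.

Lemma deck0 z : deck 0 0 z = z.
Proof.
by case: z => x s; rewrite /deck /= Bpow0 mulmx1 /intmx map_mx0 addr0 subr0.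
Qed.

Lemma deck_inv n w z : deck (- n) (- (w *m Bz ^ (- n))) (deck n w z) = z.
Proof. by rewrite deck_comp addrN subrr deck0. Qed.

Local Notation rel := (@bundle_rel_prop R A).

Lemma rel_deck a b : rel a b -> exists n w, b = deck n w a.
Proof.
elim=> {a b} [a b hab| a | a b _ [n [w ->]] | a b c _ [n [w ->]] _ [m [v ->]]].
- case: hab => [->|[->|->]].
  + exists 0, (delta_mx 0 0); rewrite /deck Bpow0 mulmx1 subr0 /intmx.
    by rewrite map_delta_mx.
  + exists 0, (delta_mx 0 1); rewrite /deck Bpow0 mulmx1 subr0 /intmx.
    by rewrite map_delta_mx.
  + by exists 1, 0; rewrite /deck Bpow1 /intmx map_mx0 addr0.
- by exists 0, 0; rewrite deck0.
- by exists (- n), (- (w *m Bz ^ (- n))); rewrite deck_inv.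
- by exists (n + m), (w *m Bz ^ m + v); rewrite deck_comp.
Qed.

End Orbit.

Section Orbit2.
Variable R : realType.
Variable A : 'M[int]_2.
Hypothesis hA : \det A = 1.
Local Notation cover := ((matrix R 1 2) * R)%type.
Local Notation rel := (@bundle_rel_prop R A).
Local Notation deck := (@deck R A).
Local Notation Bpow := (@Bpow R A).

Lemma rel_refl z : rel z z. Proof. exact: rst_refl. Qed.
Lemma rel_sym a b : rel a b -> rel b a. Proof. exact: rst_sym. Qed.
Lemma rel_trans a b c : rel a b -> rel b c -> rel a c. Proof. exact: rst_trans. Qed.
Lemma rel_step a b : gen_move A a b -> rel a b. Proof. exact: rst_step. Qed.

Lemma rel_transl_nat (i : 'I_2) (k : nat) z :
  rel z (z.1 + k%:R *: delta_mx 0 i, z.2).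
Proof.
elim: k => [|k IH]; first by rewrite scale0r addr0; case: z => x s; exact: rst_refl.
apply: rel_trans IH _; apply: rel_step.
have -> : z.1 + k.+1%:R *: delta_mx 0 i = (z.1 + k%:R *: delta_mx 0 i) + delta_mx 0 i.
  by rewrite -natr1 scalerDl scale1r addrA.
case: i => [[|[|//]] hi]; rewrite /gen_move /=.
  by left; congr (_ + delta_mx _ _, _); apply: val_inj.
by right; left; congr (_ + delta_mx _ _, _); apply: val_inj.
Qed.

Lemma rel_transl_int (i : 'I_2) (k : int) z :
  rel z (z.1 + k%:~R *: delta_mx 0 i, z.2).
Proof.
case: k => k; first exact: rel_transl_nat.
apply: rel_sym.
have := rel_transl_nat i k.+1 (z.1 + (Negz k)%:~R *: delta_mx 0 i, z.2).
rewrite /= -addrA -scalerDl NegzE mulrNz addNr scale0r addr0.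
by case: z.
Qed.

Lemma intmx_rv (w : 'rV[int]_2) :
  intmx R w = (w 0 0)%:~R *: delta_mx 0 0 + (w 0 1)%:~R *: delta_mx 0 1.
Proof.
apply/rowP => j; rewrite !mxE.
case: j => [[|[|//]] hj] /=.
- have -> : Ordinal hj = 0 by apply: val_inj.
  by rewrite mulr1 mulr0 addr0.
- rewrite mulr0 mulr1 add0r; congr (_%:~R); congr (w _ _); exact: val_inj.
Qed.

Lemma rel_intmx (w : 'rV[int]_2) z : rel z (z.1 + intmx R w, z.2).
Proof.
rewrite intmx_rv addrA.
apply: rel_trans (rel_transl_int 0 (w 0 0) z) _.
exact: (rel_transl_int 1 (w 0 1) (z.1 + (w 0 0)%:~R *: delta_mx 0 0, z.2)).
Qed.

Lemma deck_succ n z : gen_move A (deck n 0 z) (deck (n + 1) 0 z).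
Proof.
right; right; rewrite /deck /intmx /= map_mx0 !addr0 (@BpowD R A hA) (@Bpow1 R A) mulmxA.
by rewrite intrD opprD addrA.
Qed.

Lemma rel_deck0 n z : rel z (deck n 0 z).
Proof.
have h0 : rel z (deck 0 0 z) by rewrite deck0; apply: rel_refl.
have hp : forall k : nat, rel z (deck k 0 z).
  elim=> [|k IH] //; apply: rel_trans IH _; apply: rel_step.
  have e : (k.+1)%:Z = k%:Z + 1 by rewrite -addn1 PoszD.
  by rewrite e; exact: deck_succ.
have hn : forall k : nat, rel z (deck (- k%:Z) 0 z).
  elim=> [|k IH]; first by rewrite oppr0.
  apply: rel_trans IH _; apply: rel_sym; apply: rel_step.
  have e : (k.+1)%:Z = k%:Z + 1 by rewrite -addn1 PoszD.
  have := deck_succ (- (k.+1)%:Z) z.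
  by rewrite e opprD addrNK.
case: n => k; first exact: hp.
by rewrite NegzE; exact: hn.
Qed.

Lemma rel_deckE n w z : rel z (deck n w z).
Proof.
apply: rel_trans (rel_deck0 n z) _.
have := rel_intmx w (deck n 0 z).
by rewrite /deck /intmx /= map_mx0 addr0.
Qed.

Lemma piE (a b : cover) : proj_M A a = proj_M A b <-> rel a b.
Proof.
split.
  move=> h; have : bundle_rel A a b.
    by apply/(eqquotP (bundle_quot R A)); exact: h.
  by move/asboolP.
move=> h; apply/(eqquotP (bundle_quot R A)); exact/asboolP.
Qed.

End Orbit2.

Section Norms.
Variable R : realType.

Lemma entry_le_norm m n (x : 'M[R]_(m, n)) i j : `|x i j| <= `|x|.
Proof.
have -> : `|x| = mx_norm x by []. rewrite mx_normrE.
exact: (le_bigmax _ (fun ij : 'I_m * 'I_n => `|x ij.1 ij.2|) (i, j)).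
Qed.

Lemma norm_le_entries m n (x : 'M[R]_(m, n)) c :
  0 <= c -> (forall i j, `|x i j| <= c) -> `|x| <= c.
Proof.
move=> c0 h; have -> : `|x| = mx_norm x by []. rewrite mx_normrE.
by apply: bigmax_le => // -[i j] _; exact: h.
Qed.

Definition msum (M : 'M[R]_2) := `|M 0 0| + `|M 0 1| + `|M 1 0| + `|M 1 1|.

Lemma msum_ge0 M : 0 <= msum M.
Proof. by rewrite /msum !addr_ge0. Qed.

Definition opb (M : 'M[R]_2) (c : R) := forall x : 'rV[R]_2, `|x *m M| <= c * `|x|.

Lemma ord2_cases (j : 'I_2) : j = 0 \/ j = 1.
Proof.
case: j => [[|[|//]] hj]; [left|right]; exact: val_inj.
Qed.

Lemma opb_msum M : opb M (msum M).
Proof.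
move=> x; apply: norm_le_entries.
  by apply: mulr_ge0; [exact: msum_ge0|exact: normr_ge0].
move=> i j; rewrite !mxE !big_ord_recr big_ord0 /= add0r.
have e0 : (ord_max : 'I_2) = 1 by apply: val_inj.
have e1 : (widen_ord (leqnSn 1) ord_max : 'I_2) = 0 by apply: val_inj.
rewrite e0 e1 (_ : i = 0); last by case: i => [[|//] ?]; exact: val_inj.
have h0 := entry_le_norm x 0 0; have h1 := entry_le_norm x 0 1.
have n0 := normr_ge0 (x 0 0); have n1 := normr_ge0 (x 0 1).
have hx : 0 <= `|x| by exact: normr_ge0.
have a00 := normr_ge0 (M 0 0); have a01 := normr_ge0 (M 0 1).
have a10 := normr_ge0 (M 1 0); have a11 := normr_ge0 (M 1 1).
apply: le_trans (ler_normD _ _) _; rewrite !normrM /msum.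
have p1 : forall a b c : R, 0 <= a -> a <= c -> 0 <= b -> a * b <= c * b.
  by move=> a b c ha hac hb; rewrite ler_wpM2r.
case: (ord2_cases j) => ->.
- have q0 := p1 _ _ _ n0 h0 a00; have q1 := p1 _ _ _ n1 h1 a10.
  have r1 : `|x| * `|M 0 0| + `|x| * `|M 1 0| <= `|x| * (`|M 0 0| + `|M 0 1| + `|M 1 0| + `|M 1 1|).
    rewrite -mulrDr ler_wpM2l //; lra.
  lra.
- have q0 := p1 _ _ _ n0 h0 a01; have q1 := p1 _ _ _ n1 h1 a11.
  have r1 : `|x| * `|M 0 1| + `|x| * `|M 1 1| <= `|x| * (`|M 0 0| + `|M 0 1| + `|M 1 0| + `|M 1 1|).
    rewrite -mulrDr ler_wpM2l //; lra.
  rewrite mulrC [X in _ + X]mulrC. lra.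
Qed.

Lemma opb_mul M1 M2 c1 c2 : 0 <= c2 -> opb M1 c1 -> opb M2 c2 -> opb (M1 *m M2) (c1 * c2).
Proof.
move=> c2p h1 h2 x; rewrite mulmxA; apply: le_trans (h2 _) _.
by rewrite [c1 * c2]mulrC -mulrA ler_wpM2l.
Qed.

Lemma opb_le M c c' : c <= c' -> opb M c -> opb M c'.
Proof. by move=> hc h x; apply: le_trans (h x) _; rewrite ler_wpM2r. Qed.

Lemma opb1 : opb 1%:M 1.
Proof. by move=> x; rewrite mulmx1 mul1r. Qed.

End Norms.

Section Deck.
Variable R : realType.
Variable A : 'M[int]_2.
Hypothesis hA : \det A = 1.
Local Notation cover := ((matrix R 1 2) * R)%type.
Local Notation rel := (@bundle_rel_prop R A).
Local Notation deck := (@deck R A).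
Local Notation Bpow := (@Bpow R A).

Definition beta : R := Num.max 1 (Num.max (msum (intmx R (Bz A))) (msum (intmx R ((Bz A)^-1)))).

Lemma beta_ge1 : 1 <= beta.
Proof. by rewrite /beta le_max lexx. Qed.

Lemma beta_ge0 : 0 <= beta.
Proof. exact: le_trans ler01 beta_ge1. Qed.

Lemma opb_pow (C : 'M[int]_2) : msum (intmx R C) <= beta ->
  forall k : nat, opb (intmx R (C ^+ k)) (beta ^+ k).
Proof.
move=> hC; elim=> [|k IH].
  by rewrite expr0 /intmx map_mx1 expr0; exact: opb1.
rewrite exprSr /intmx -mulmxE map_mxM exprSr.
apply: opb_mul IH _; first exact: beta_ge0.
exact: opb_le hC (opb_msum _).
Qed.

Lemma opb_Bpow (n : int) : opb (Bpow n) (beta ^+ `|n|%N).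
Proof.
case: n => k.
  apply: opb_pow; rewrite /beta le_max; apply/orP; right.
  by rewrite le_max lexx.
rewrite /Bpow NegzE -exprz_inv.
have -> : (Bz A)^-1 ^ (Posz k.+1) = ((Bz A)^-1) ^+ k.+1 by [].
have -> : `|- (Posz k.+1)|%N = k.+1 by rewrite abszN.
apply: opb_pow; rewrite /beta le_max; apply/orP; right.
by rewrite le_max lexx orbT.
Qed.

Lemma deck_lip n w (u v : cover) :
  `|deck n w u - deck n w v| <= beta ^+ `|n|%N * `|u - v|.
Proof.
rewrite !prod_normE /deck /=.
have -> : u.1 *m Bpow n + intmx R w - (v.1 *m Bpow n + intmx R w) = (u.1 - v.1) *m Bpow n.
  by rewrite mulmxBl opprD addrACA subrr addr0.
have -> : u.2 - n%:~R - (v.2 - n%:~R) = u.2 - v.2.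
  by rewrite opprB addrA subrK.
have hb : 1 <= beta ^+ `|n|%N by apply: exprn_ege1; exact: beta_ge1.
rewrite ge_max; apply/andP; split.
  apply: le_trans (opb_Bpow n _) _; rewrite ler_wpM2l //.
    exact: le_trans ler01 hb.
  by rewrite le_max lexx.
apply: le_trans (_ : `|u.2 - v.2| <= `|u - v|) _.
  by rewrite prod_normE /= le_max lexx orbT.
rewrite -[X in X <= _]mul1r ler_wpM2r //.
Qed.

Lemma rel_s (a b : cover) : rel a b -> exists k : int, b.2 = a.2 + k%:~R.
Proof.
move=> /(rel_deck hA) [n [w ->]]; exists (- n); by rewrite /= mulrNz.
Qed.

Lemma int_small (k : int) : `|(k%:~R : R)| < 1 -> k = 0.
Proof.
rewrite -intr_norm (_ : (1 : R) = (1%:Z)%:~R) // ltr_int => h.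
apply/eqP; rewrite -normr_eq0 eq_le normr_ge0 andbT.
by rewrite -ltzD1 add0r.
Qed.

Lemma rel_sep (a b : cover) : rel a b -> `|a - b| < 1 -> a = b.
Proof.
move=> /(rel_deck hA) [n [w ->]] hd.
have h2 : `|a.2 - (a.2 - n%:~R)| < 1.
  apply: le_lt_trans hd; rewrite [X in _ <= X]prod_normE le_max /=; apply/orP; right; exact: lexx.
rewrite opprB addrC subrK in h2.
have n0 := int_small h2; subst n.
have h1 : `|a.1 - (a.1 *m Bpow 0 + intmx R w)| < 1.
  apply: le_lt_trans hd; rewrite [X in _ <= X]prod_normE le_max /=; apply/orP; left; exact: lexx.
rewrite Bpow0 mulmx1 opprD addrA subrr add0r normrN in h1.
have w0 : w = 0.
  apply/rowP => j; rewrite mxE; apply: int_small.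
  have := entry_le_norm (intmx R w) 0 j; rewrite /intmx mxE (_ : 0 = ord0) //.
  move=> hh; exact: le_lt_trans hh h1.
by subst w; rewrite deck0.
Qed.

End Deck.

Section Open.
Variable R : realType.
Variable A : 'M[int]_2.
Hypothesis hA : \det A = 1.
Local Notation cover := ((matrix R 1 2) * R)%type.
Local Notation rel := (@bundle_rel_prop R A).
Local Notation deck := (@deck R A).
Local Notation pi := (@proj_M R A).

Definition Wset (z : cover) (r : R) : set (Mspace R A) :=
  [set m | exists b, pi b = m /\ `|b - z| < r].

Lemma ball_normP (V : pseudoMetricNormedZmodType R) (x y : V) e :
  ball x e y <-> `|x - y| < e.
Proof. by rewrite -ball_normE. Qed.

Lemma open_normP (V : pseudoMetricNormedZmodType R) (U : set V) :
  (forall x, U x -> exists2 e : R, 0 < e & forall y, `|x - y| < e -> U y) -> open U.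
Proof.
move=> h; rewrite openE => x Ux; rewrite /interior; apply/nbhs_ballP.
have [e e0 he] := h x Ux; exists e => // y /ball_normP; exact: he.
Qed.

Lemma Wset_open z r : open (Wset z r).
Proof.
rewrite /open /= /quotient_open; apply: open_normP => c /= [b [hb hbz]].
have : rel c b by apply: rel_sym; apply/piE; exact: hb.
move=> /(rel_deck hA) [n [w hbd]].
set L := @beta R A ^+ `|n|%N.
have L1 : 1 <= L by apply: exprn_ege1; exact: (@beta_ge1 R A).
have L0 : 0 < L by exact: lt_le_trans ltr01 L1.
exists ((r - `|b - z|) / L).
  by apply: divr_gt0 => //; rewrite subr_gt0.
move=> c' hc'; exists (deck n w c'); split.
  by apply/piE; apply: rel_sym; apply: rel_deckE.
have hl := @deck_lip R A n w c' c.
rewrite -hbd -/L in hl.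
have : `|deck n w c' - z| <= `|deck n w c' - b| + `|b - z|.
  exact: ler_distD.
have : L * `|c' - c| < r - `|b - z|.
  by rewrite distrC -ltr_pdivlMl // mulrC.
move=> h1 h2; lra.
Qed.

Lemma Wset_center z r : 0 < r -> Wset z r (pi z).
Proof. by move=> r0; exists z; rewrite subrr normr0. Qed.

End Open.

Section TopoHelp.
Variable R : realType.

Lemma within_cont_in (V : pseudoMetricNormedZmodType R) (T : topologicalType)
  (S : set V) (f : V -> T) (x : V) (W : set T) :
  {within S, continuous f} -> S x -> open W -> W (f x) ->
  exists2 e : R, 0 < e & forall y, S y -> `|x - y| < e -> W (f y).
Proof.
move=> /subspace_continuousP hf Sx oW Wfx.
have := hf x Sx W; rewrite /= nbhs_simpl => /(_ (open_nbhs_nbhs (conj oW Wfx))).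
rewrite /within /= => /nbhs_ballP [e e0 he]; exists e => // y Sy hy.
have : ball x e y by rewrite -ball_normE.
by move/he => /(_ Sy).
Qed.

Lemma within_cont_norm (V V' : pseudoMetricNormedZmodType R) (S : set V) (f : V -> V') :
  (forall x, S x -> forall e : R, 0 < e -> exists2 d : R, 0 < d &
     forall y, S y -> `|x - y| < d -> `|f x - f y| < e) ->
  {within S, continuous f}.
Proof.
move=> h; apply/subspace_continuousP => x Sx W /= /nbhs_ballP [e e0 he].
rewrite nbhs_simpl /within /=; apply/nbhs_ballP.
have [d d0 hd] := h x Sx e e0; exists d => // y hy Sy.
apply: he; rewrite -ball_normE /=; apply: hd => //.
by move: hy; rewrite -ball_normE.
Qed.

Lemma within_cont_comp (T1 T2 T3 : topologicalType) (I : set T1) (U : set T2)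
  (f : T1 -> T2) (g : T2 -> T3) :
  {within I, continuous f} -> {within U, continuous g} ->
  (forall x, I x -> U (f x)) -> {within I, continuous (g \o f)}.
Proof.
move=> /subspace_continuousP hf /subspace_continuousP hg hIU.
apply/subspace_continuousP => x Ix W /= hW.
have := hg (f x) (hIU x Ix) W hW; rewrite /= nbhs_simpl /within /= => h1.
have := hf x Ix _ h1; rewrite /= nbhs_simpl /within /= => h2.
have h3 : nbhs x [set y | I y -> W (g (f y))].
  apply: (@filterS _ (nbhs x) _ _ _ _ h2) => y /= h Iy; exact: h Iy (hIU y Iy).
exact: h3.
Qed.

Lemma within_cont_compT (T1 T2 T3 : topologicalType) (I : set T1)
  (f : T1 -> T2) (g : T2 -> T3) :
  {within I, continuous f} -> continuous g -> {within I, continuous (g \o f)}.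
Proof.
move=> hf hg.
have hg' : {within setT, continuous g} by apply: continuous_subspaceT.
exact: (within_cont_comp hf hg' (fun _ _ => Logic.I)).
Qed.

End TopoHelp.

Section UCsec.
Variable R : realType.
Variable A : 'M[int]_2.
Hypothesis hA : \det A = 1.
Local Notation cover := ((matrix R 1 2) * R)%type.
Local Notation rel := (@bundle_rel_prop R A).
Local Notation deck := (@deck R A).
Local Notation pi := (@proj_M R A).
Local Notation S := (@unit_square R).

Lemma compact_square : compact S.
Proof.
have := compact_setX (@segment_compact R 0 1) (@segment_compact R 0 1).
have e : `[(0:R), 1]%classic `*` `[(0:R), 1]%classic = S.
  by apply/seteqP; split => p /=; rewrite /unit_square /= ?in_itv /= ?inE.
by rewrite e.
Qed.

Lemma pi_surj (m : Mspace R A) : exists z, pi z = m.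
Proof. by exists (repr m); rewrite /proj_M reprK. Qed.

Lemma nat_big (x : R) : exists N : nat, x < N%:R.
Proof. by exists (Num.truncn x).+1; exact: truncnS_gt. Qed.

Lemma UC (H : R * R -> Mspace R A) : {within S, continuous H} ->
  forall K e : R, 0 < e -> exists2 d : R, 0 < d & forall p q, S p -> S q -> `|p - q| < d ->
  forall a, pi a = H p -> `|a.2| <= K -> exists b, pi b = H q /\ `|a - b| < e.
Proof.
move=> hH K e e0.
pose P := fun (n : nat) (y : R * R) => S y -> forall q, S q -> `|y - q| < (n.+1%:R)^-1 ->
  forall a, pi a = H y -> `|a.2| <= K -> exists b, pi b = H q /\ `|a - b| < e.
have loc : forall x, S x -> \forall x' \near x & n \near \oo, P n x'.
  move=> x Sx.
  have [z hz] := pi_surj (H x).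
  have [Nx hNx] := nat_big (`|z.2| + 1 + K).
  set L := beta R A ^+ Nx.
  have L1 : 1 <= L by apply: exprn_ege1; exact: (@beta_ge1 R A).
  have L0 : 0 < L by exact: lt_le_trans ltr01 L1.
  set r0 := Num.min 1 (e / (2 * L)).
  have r0a : r0 <= 1 by rewrite /r0 ge_min lexx.
  have r0b : r0 <= e / (2 * L) by rewrite /r0 ge_min lexx orbT.
  have r00 : 0 < r0 by rewrite /r0 lt_min ltr01 /= divr_gt0 // mulr_gt0.
  have [rho rho0 hrho] := within_cont_in hH Sx (@Wset_open R A hA z r0) (eq_ind _ _ (@Wset_center R A z r0 r00) _ hz).
  have [N0 hN0] := nat_big (2 / rho).
  exists ([set y | `|x - y| < rho / 2], [set n | (N0 <= n)%N]).
    split => /=.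
      apply/nbhs_ballP; exists (rho / 2); first by rewrite /= divr_gt0.
      by move=> y; rewrite -ball_normE.
    by exists N0.
  move=> [y n] /= [hy hn] Sy q Sq hyq a ha hK.
  have hn1 : (n.+1%:R)^-1 < rho / 2.
    have h2 : 2 / rho < n.+1%:R.
      apply: lt_le_trans hN0 _; rewrite ler_nat; exact: leq_trans hn (leqnSn n).
    have m0 : 0 < (n.+1%:R : R) by rewrite ltr0n.
    rewrite ltr_pdivrMr // in h2.
    by rewrite -div1r ltr_pdivrMr // mulrAC ltr_pdivlMr // mul1r mulrC.
  have hy' : `|x - y| < rho by apply: lt_trans hy _; rewrite ltr_pdivrMr // ltr_pMr // ltr1n.
  have [a0 [ha0 ha0z]] := hrho y Sy hy'.
  have hq' : `|x - q| < rho.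
    apply: le_lt_trans (ler_distD y x q) _.
    rewrite [X in _ < X](splitr rho); apply: ltrD => //; exact: lt_trans hyq hn1.
  have [b0 [hb0 hb0z]] := hrho q Sq hq'.
  have : rel a0 a by apply/piE; rewrite ha0 ha.
  move=> /(rel_deck hA) [m [w ham]].
  exists (deck m w b0); split.
    rewrite -hb0; apply/piE; apply: rel_sym; exact: rel_deckE.
  have hl := @deck_lip R A m w a0 b0.
  rewrite -ham in hl.
  have hm : (`|m|%N < Nx)%N.
    rewrite -(ltr_nat R) natr_absz intr_norm.
    have e2 : a.2 = a0.2 - m%:~R by rewrite ham.
    have e3 : (m%:~R : R) = a0.2 - a.2 by rewrite e2 opprB addrC subrK.
    rewrite e3.
    have c1 : `|a0.2 - z.2| <= `|a0 - z|.
      by rewrite [X in _ <= X]prod_normE le_max /= lexx orbT.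
    have c2 : `|a0.2 - a.2| <= `|a0.2| + `|a.2| by exact: ler_normB.
    have c3 : `|a0.2| <= `|a0.2 - z.2| + `|z.2|.
      by have := ler_normD (a0.2 - z.2) z.2; rewrite subrK.
    lra.
  have hbm : beta R A ^+ `|m|%N <= L.
    by apply: ler_weXn2l; [exact: (@beta_ge1 R A)| exact: ltnW].
  have hbm1 : 1 <= beta R A ^+ `|m|%N by apply: exprn_ege1; exact: (@beta_ge1 R A).
  have hab : `|a0 - b0| < 2 * r0.
    have := ler_distD z a0 b0; rewrite [`|z - b0|]distrC; lra.
  have hL : L * (2 * r0) <= e.
    rewrite ler_pdivlMr ?mulr_gt0 // in r0b; lra.
  have : beta R A ^+ `|m|%N * `|a0 - b0| < L * (2 * r0).
    apply: lt_le_trans (_ : beta R A ^+ `|m|%N * (2 * r0) <= L * (2 * r0)).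
      by rewrite ltr_pM2l //; exact: lt_le_trans ltr01 hbm1.
    by rewrite ler_pM2r // mulr_gt0.
  lra.
have := (compact_near_coveringP S).1 compact_square nat \oo P _ loc.
move=> [N _ hN].
exists (N.+1%:R)^-1; first by rewrite invr_gt0 ltr0n.
move=> p q Sp Sq hpq a ha hK.
exact: (hN N (leqnn N) p Sp Sp q Sq hpq a ha hK).
Qed.

End UCsec.

Fixpoint iter_lift (X : Type) (step : nat -> X -> X) (x0 : X) (k : nat) : X :=
  match k with 0 => x0 | k'.+1 => step k' (iter_lift step x0 k') end.

Section Chain.
Variable R : realType.
Local Notation S := (@unit_square R).

Lemma dist4 (X : pseudoMetricNormedZmodType R) (a b c d e : X) :
  `|a - e| <= `|a - b| + `|b - c| + `|c - d| + `|d - e|.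
Proof.
apply: le_trans (ler_distD d a e) _; rewrite lerD2r.
apply: le_trans (ler_distD c a d) _; rewrite lerD2r.
exact: ler_distD.
Qed.

Lemma S_norm p : S p -> `|p| <= 1.
Proof.
move=> [h1 h2]; rewrite prod_normE ge_max.
move: h1 h2; rewrite !in_itv /= => /andP[a1 a2] /andP[b1 b2].
by rewrite !ger0_norm // a2 b2.
Qed.

Lemma S_scale (c : R) p : 0 <= c <= 1 -> S p -> S (c *: p).
Proof.
move=> /andP[c0 c1] [h1 h2]; move: h1 h2; rewrite !in_itv /= => /andP[a1 a2] /andP[b1 b2].
split; rewrite in_itv /=; apply/andP; split.
- exact: mulr_ge0.
- by rewrite -[1]mul1r; apply: ler_pM.
- exact: mulr_ge0.
- by rewrite -[1]mul1r; apply: ler_pM.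
Qed.

Lemma chain_lift (X : pseudoMetricNormedZmodType R) (L G : R * R -> X -> Prop) (x0 : X) :
  L 0 x0 -> G 0 x0 ->
  (forall p, S p -> forall a b, L p a -> L p b -> `|a - b| < 1 -> a = b) ->
  (forall e : R, 0 < e -> exists2 d : R, 0 < d & forall p q, S p -> S q -> `|p - q| < d ->
     forall a, L p a -> G p a -> exists b, L q b /\ `|a - b| < e) ->
  (exists2 eta : R, 0 < eta & forall p q a b, S p -> S q -> `|p - q| < eta ->
     L p a -> G p a -> L q b -> `|a - b| < 4^-1 -> G q b) ->
  exists F : R * R -> X, (forall p, S p -> L p (F p) /\ G p (F p)) /\
    (forall e : R, 0 < e -> exists2 d : R, 0 < d & forall p q, S p -> S q -> `|p - q| < d ->
       `|F p - F q| < e) /\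
    (exists B : R, forall p, S p -> `|F p - x0| <= B).
Proof.
move=> L0 G0 sep U [eta eta0 gs].
have q0 : (0 : R) < 4^-1 by rewrite invr_gt0.
have [d1 d10 hd1] := U _ q0.
set d := Num.min d1 eta.
have d0 : 0 < d by rewrite lt_min d10 eta0.
have dd1 : d <= d1 by rewrite ge_min lexx.
have deta : d <= eta by rewrite ge_min lexx orbT.
pose N := (Num.truncn (d^-1)).+1.
have hN : d^-1 < N%:R by exact: truncnS_gt.
have N0 : (0 : R) < N%:R by rewrite ltr0n.
have hN1 : (N%:R)^-1 < d.
  have h := hN; rewrite -[d^-1]mulr1 ltr_pdivrMl // in h.
  by rewrite -div1r ltr_pdivrMr // mulrC.
pose ch (p : R * R) (k : nat) : R * R := (k%:R / N%:R) *: p.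
have chS : forall p k, S p -> (k <= N)%N -> S (ch p k).
  move=> p k Sp hk; apply: S_scale => //; apply/andP; split.
    by apply: divr_ge0; rewrite ler0n.
  by rewrite ler_pdivrMr // mul1r ler_nat.
have ch0 : forall p, ch p 0 = 0 by move=> p; rewrite /ch mul0r scale0r.
have chstep : forall p k, S p -> `|ch p k - ch p k.+1| < d.
  move=> p k Sp; rewrite /ch distrC -scalerBl -mulrBl -natrB // subSnn normrZ.
  apply: le_lt_trans hN1.
  rewrite mul1r ger0_norm ?invr_ge0 ?ler0n //.
  by rewrite -[X in _ <= X]mulr1 ler_wpM2l ?invr_ge0 ?ler0n // S_norm.
have chdist : forall p q k, (k <= N)%N -> `|ch p k - ch q k| <= `|p - q|.
  move=> p q k hk; rewrite /ch -scalerBr normrZ.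
  rewrite -[X in _ <= X]mul1r ler_wpM2r // ger0_norm ?divr_ge0 ?ler0n //.
  by rewrite ler_pdivrMr // mul1r ler_nat.
pose step (p : R * R) (k : nat) (a : X) :=
  xget x0 (fun b => L (ch p k.+1) b /\ `|a - b| < 4^-1).
pose a p := iter_lift (step p) x0.
have stepP : forall p, S p -> forall k, (k < N)%N -> L (ch p k) (a p k) -> G (ch p k) (a p k) ->
    L (ch p k.+1) (a p k.+1) /\ `|a p k - a p k.+1| < 4^-1.
  move=> p Sp k hk IL IG.
  have hS := chS p k Sp (ltnW hk); have hS' := chS p k.+1 Sp hk.
  have ex : exists b, L (ch p k.+1) b /\ `|a p k - b| < 4^-1.
    apply: (hd1 _ _ hS hS' _ _ IL IG).
    exact: lt_le_trans (chstep p k Sp) dd1.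
  exact: (xgetPex x0 ex).
have c1 : forall p, S p -> forall k, (k <= N)%N ->
    [/\ L (ch p k) (a p k), G (ch p k) (a p k) & `|a p k - x0| <= k%:R / 4].
  move=> p Sp; elim=> [|k IH] hk.
    by rewrite ch0 /a /= subrr normr0 mul0r.
  have [IL IG IB] := IH (ltnW hk).
  have hS := chS p k Sp (ltnW hk); have hS' := chS p k.+1 Sp hk.
  have [hL hd] := stepP p Sp k hk IL IG.
  split => //.
    apply: (gs _ _ _ _ hS hS' _ IL IG hL hd).
    exact: lt_le_trans (chstep p k Sp) deta.
  apply: le_trans (ler_distD (a p k) _ _) _.
  rewrite distrC -natr1 mulrDl addrC; apply: lerD => //.
  by rewrite mul1r ltW.
have c2 : forall p q, S p -> S q -> `|p - q| < d -> forall k, (k <= N)%N ->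
    `|a p k - a q k| < 4^-1.
  move=> p q Sp Sq hpq; elim=> [|k IH] hk.
    by rewrite /a /= subrr normr0.
  have IH' := IH (ltnW hk).
  have [pL pG _] := c1 p Sp k.+1 hk; have [qL qG _] := c1 q Sq k.+1 hk.
  have [pL' pG' _] := c1 p Sp k (ltnW hk); have [qL' qG' _] := c1 q Sq k (ltnW hk).
  have [_ sp] := stepP p Sp k hk pL' pG'; have [_ sq] := stepP q Sq k hk qL' qG'.
  have hS := chS p k.+1 Sp hk; have hS' := chS q k.+1 Sq hk.
  have [c [cL cd]] : exists c, L (ch q k.+1) c /\ `|a p k.+1 - c| < 4^-1.
    apply: (hd1 _ _ hS hS' _ _ pL pG).
    exact: le_lt_trans (chdist p q k.+1 hk) (lt_le_trans hpq dd1).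
  have ec : c = a q k.+1.
    apply: (sep _ hS' _ _ cL qL).
    have h := dist4 c (a p k.+1) (a p k) (a q k) (a q k.+1).
    rewrite [`|c - a p k.+1|]distrC [`|a p k.+1 - a p k|]distrC in h.
    lra.
  by rewrite -ec.
pose F p := a p N.
exists F; split; last split.
- by move=> p Sp; have [h1 h2 _] := c1 p Sp N (leqnn N); rewrite /ch divff ?scale1r // in h1 h2; rewrite gt_eqF.
- move=> e e0.
  set e' := Num.min e 4^-1.
  have e'0 : 0 < e' by rewrite lt_min e0 q0.
  have e'1 : e' <= e by rewrite ge_min lexx.
  have e'2 : e' <= 4^-1 by rewrite ge_min lexx orbT.
  have [de de0 hde] := U _ e'0.
  exists (Num.min d de); first by rewrite lt_min d0 de0.
  move=> p q Sp Sq hpq.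
  have hpd : `|p - q| < d by apply: lt_le_trans hpq _; rewrite ge_min lexx.
  have hpde : `|p - q| < de by apply: lt_le_trans hpq _; rewrite ge_min lexx orbT.
  have [pL pG _] := c1 p Sp N (leqnn N); have [qL qG _] := c1 q Sq N (leqnn N).
  have chN : forall r, ch r N = r by move=> r; rewrite /ch divff ?scale1r // gt_eqF.
  rewrite !chN in pL pG qL qG.
  have [c [cL cd]] := hde p q Sp Sq hpde _ pL pG.
  have ec : c = F q.
    apply: (sep _ Sq _ _ cL qL).
    have h1 := ler_distD (F p) c (F q); have h2 := c2 p q Sp Sq hpd N (leqnn N).
    rewrite [`|c - F p|]distrC /F in h1 h2 *; lra.
  by rewrite -ec; exact: lt_le_trans cd e'1.
- exists (N%:R / 4) => p Sp; by have [_ _ h] := c1 p Sp N (leqnn N).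
Qed.

End Chain.

Section Lift.
Variable R : realType.
Variable A : 'M[int]_2.
Hypothesis hA : \det A = 1.
Local Notation cover := ((matrix R 1 2) * R)%type.
Local Notation rel := (@bundle_rel_prop R A).
Local Notation deck := (@deck R A).
Local Notation pi := (@proj_M R A).
Local Notation S := (@unit_square R).

Definition isint (x : R) := exists k : int, x = k%:~R.

Lemma isint_small x : isint x -> `|x| < 1 -> x = 0.
Proof. by move=> [k ->] h; rewrite (int_small h). Qed.

Lemma isintB x y : isint x -> isint y -> isint (x - y).
Proof. by move=> [k ->] [l ->]; exists (k - l); rewrite intrB. Qed.

Lemma pi_s a b : pi a = pi b -> isint (b.2 - a.2).
Proof.
move=> /piE /(rel_s hA) [k ->]; exists k; by rewrite addrAC subrr add0r.
Qed.

Lemma lift_square (H : R * R -> Mspace R A) : {within S, continuous H} ->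
  exists Hl : R * R -> cover, (forall p, S p -> pi (Hl p) = H p) /\
    (forall e : R, 0 < e -> exists2 d : R, 0 < d & forall p q, S p -> S q -> `|p - q| < d ->
       `|Hl p - Hl q| < e).
Proof.
move=> hH.
have [z0 hz0] := pi_surj (H 0).
pose L1 := fun (p : R * R) (s : R) => exists z, pi z = H p /\ z.2 = s.
have sep1 : forall p, S p -> forall a b, L1 p a -> L1 p b -> `|a - b| < 1 -> a = b.
  move=> p _ a b [za [ha <-]] [zb [hb <-]] hd.
  have hi : isint (za.2 - zb.2) by apply: pi_s; rewrite ha hb.
  by apply/eqP; rewrite -subr_eq0; apply/eqP; exact: isint_small.
have U1 : forall e : R, 0 < e -> exists2 d : R, 0 < d & forall p q, S p -> S q -> `|p - q| < d ->
     forall a, L1 p a -> (fun _ _ => True) p a -> exists b, L1 q b /\ `|a - b| < e.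
  move=> e e0; have [d d0 hd] := UC hA hH 1 e0; exists d => // p q Sp Sq hpq a [z [hz <-]] _.
  set n := Num.floor z.2.
  have [fl1 fl2] : n%:~R <= z.2 /\ z.2 < (n + 1)%:~R by apply/andP; exact: floor_itv.
  have hz' : pi (deck n 0 z) = H p by rewrite -hz; apply/piE; apply: rel_sym; exact: rel_deckE.
  have hK : `|(deck n 0 z).2| <= 1.
    rewrite /= ger0_norm ?subr_ge0 //; rewrite intrD in fl2; lra.
  have [b' [hb' hdb]] := hd p q Sp Sq hpq _ hz' hK.
  exists (deck (- n) 0 b').2; split.
    exists (deck (- n) 0 b'); split => //.
    by rewrite -hb'; apply/piE; apply: rel_sym; exact: rel_deckE.
  apply: le_lt_trans hdb.
  have -> : z.2 - (deck (- n) 0 b').2 = (deck n 0 z).2 - b'.2.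
    rewrite /= mulrNz; lra.
  by rewrite [X in _ <= X]prod_normE le_max lexx orbT.
have [sig [hsig1 [hsig2 [B1 hsig3]]]] :=
  @chain_lift R R^o L1 (fun _ _ => True) z0.2 (ex_intro _ z0 (conj hz0 erefl)) Logic.I sep1 U1
    (ex_intro2 _ _ 1 ltr01 (fun _ _ _ _ _ _ _ _ _ _ _ => Logic.I)).
have S0 : S 0 by split; rewrite /= in_itv /= lexx ler01.
set c := z0.2 - sig 0.
have ic : isint c.
  have [[z [hz hzs]] _] := hsig1 0 S0.
  have := pi_s (a := z) (b := z0); rewrite hz hz0 hzs => /(_ erefl) [k hk].
  by exists k; rewrite /c hk.
pose L2 := fun (p : R * R) (z : cover) => pi z = H p.
pose G2 := fun (p : R * R) (z : cover) => z.2 = sig p + c.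
have sep2 : forall p, S p -> forall a b, L2 p a -> L2 p b -> `|a - b| < 1 -> a = b.
  move=> p _ a b ha hb hd; apply: (rel_sep hA) hd; apply/piE; by rewrite ha hb.
have U2 : forall e : R, 0 < e -> exists2 d : R, 0 < d & forall p q, S p -> S q -> `|p - q| < d ->
     forall a, L2 p a -> G2 p a -> exists b, L2 q b /\ `|a - b| < e.
  move=> e e0; have [d d0 hd] := UC hA hH (`|z0.2| + B1 + `|c|) e0.
  exists d => // p q Sp Sq hpq a ha hga.
  apply: (hd p q Sp Sq hpq a ha).
  rewrite hga.
  have h1 := hsig3 p Sp.
  have h2 : `|sig p + c| <= `|sig p - z0.2| + `|z0.2| + `|c|.
    apply: le_trans (ler_normD _ _) _; rewrite lerD2r.
    by have := ler_normD (sig p - z0.2) z0.2; rewrite subrK.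
  have h3 : `|sig p - z0.2| <= B1 by exact: h1.
  lra.
have q0 : (0 : R) < 4^-1 by rewrite invr_gt0.
have [eta eta0 heta] := hsig2 _ q0.
have gs2 : forall p q a b, S p -> S q -> `|p - q| < eta ->
     L2 p a -> G2 p a -> L2 q b -> `|a - b| < 4^-1 -> G2 q b.
  move=> p q a b Sp Sq hpq ha hga hb hab.
  have [[z' [hz' hz's]] _] := hsig1 q Sq.
  have i1 : isint (b.2 - sig q) by rewrite -hz's; apply: pi_s; rewrite hz' hb.
  have i2 := isintB i1 ic.
  have hs : `|sig p - sig q| < 4^-1 by exact: (heta p q Sp Sq hpq).
  have hb2 : `|a.2 - b.2| < 4^-1.
    apply: le_lt_trans hab; by rewrite [X in _ <= X]prod_normE le_max lexx orbT.
  have hlt : `|b.2 - sig q - c| < 1.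
    have -> : b.2 - sig q - c = (b.2 - a.2) + (sig p - sig q) by rewrite hga; lra.
    apply: le_lt_trans (ler_normD _ _) _; rewrite distrC; lra.
  have h0 := isint_small i2 hlt.
  rewrite /G2; lra.
have G20 : G2 0 z0 by rewrite /G2 /c addrC subrK.
have [Hl [hHl1 [hHl2 _]]] :=
  @chain_lift R cover L2 G2 z0 hz0 G20 sep2 U2 (ex_intro2 _ _ eta eta0 gs2).
exists Hl; split => //; by move=> p Sp; have [] := hHl1 p Sp.
Qed.

End Lift.

Section Final.
Variable R : realType.
Local Notation S := (@unit_square R).
Local Notation I := (`[(0:R), 1]%classic).

Lemma within_snd : {within S, continuous (fun p : R * R => p.2)}.
Proof.
apply: within_cont_norm => x _ e e0; exists e => // y _ h.
by apply: le_lt_trans h; rewrite [X in _ <= X]prod_normE le_max lexx orbT.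
Qed.

Lemma within_fst : {within S, continuous (fun p : R * R => p.1)}.
Proof.
apply: within_cont_norm => x _ e e0; exists e => // y _ h.
by apply: le_lt_trans h; rewrite [X in _ <= X]prod_normE le_max lexx.
Qed.

Lemma homot_cont (V : normedModType R) (phi : R -> V) (v0 : V) :
  {within I, continuous phi} ->
  {within S, continuous (fun p : R * R => (1 - p.2) *: phi p.1 + p.2 *: v0)}.
Proof.
move=> hphi.
have h1 : {within S, continuous (phi \o (fun p : R * R => p.1))}.
  apply: (within_cont_comp within_fst hphi) => p [] //.
apply/subspace_continuousP => x Sx.
have c1 := (proj1 (subspace_continuousP _ _) within_snd) x Sx.
have c2 := (proj1 (subspace_continuousP _ _) h1) x Sx.
apply: cvgD.
  apply: cvgZ => //; apply: cvgB => //; exact: cvg_cst.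
apply: cvgZ => //; exact: cvg_cst.
Qed.

End Final.

Section Final2.
Variable R : realType.
Local Notation S := (@unit_square R).
Local Notation I := (`[(0:R), 1]%classic).

Lemma I_scale (c u : R) : 0 <= c <= 1 -> I u -> I (c * u).
Proof.
move=> /andP[c0 c1]; rewrite /= !in_itv /= => /andP[u0 u1]; apply/andP; split.
  exact: mulr_ge0.
by rewrite -[1]mul1r; apply: ler_pM.
Qed.

Lemma I0 : I 0. Proof. by rewrite /= in_itv /= lexx ler01. Qed.
Lemma I1 : I 1. Proof. by rewrite /= in_itv /= lexx ler01. Qed.

Lemma const_path (X : pseudoMetricNormedZmodType R) (f : R -> X) :
  (exists2 d : R, 0 < d & forall u v, I u -> I v -> `|u - v| < d -> `|f u - f v| < 1) ->
  (forall u v, I u -> I v -> `|f u - f v| < 1 -> f u = f v) ->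
  forall u, I u -> f u = f 0.
Proof.
move=> [d d0 hd] heq u Iu.
pose N := (Num.truncn (d^-1)).+1.
have hN : d^-1 < N%:R by exact: truncnS_gt.
have N0 : (0 : R) < N%:R by rewrite ltr0n.
have hN1 : (N%:R)^-1 < d.
  have h := hN; rewrite -[d^-1]mulr1 ltr_pdivrMl // in h.
  by rewrite -div1r ltr_pdivrMr // mulrC.
have cI : forall k, (k <= N)%N -> I (k%:R / N%:R * u).
  move=> k hk; apply: I_scale Iu; apply/andP; split.
    by apply: divr_ge0; rewrite ler0n.
  by rewrite ler_pdivrMr // mul1r ler_nat.
have : forall k, (k <= N)%N -> f (k%:R / N%:R * u) = f 0.
  elim=> [|k IH] hk; first by rewrite mul0r mul0r.
  rewrite -(IH (ltnW hk)); apply: heq; [exact: cI|exact: cI (ltnW hk)|].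
  apply: hd; [exact: cI|exact: cI (ltnW hk)|].
  rewrite -mulrBl -mulrBl -natrB // subSnn normrM.
  move: Iu; rewrite /= in_itv /= => /andP[u0 u1].
  rewrite mul1r ger0_norm ?invr_ge0 ?ler0n // ger0_norm //.
  by apply: le_lt_trans hN1; rewrite -[X in _ <= X]mulr1 ler_wpM2l.
move=> /(_ N (leqnn N)); rewrite divff ?mul1r //; exact: lt0r_neq0.
Qed.

End Final2.

Unset Implicit Arguments.

Lemma pair_dist (R : realType) (a b c d : R) :
  `|((a, b) : R * R) - (c, d)| = Num.max `|a - c| `|b - d|.
Proof. by rewrite prod_normE. Qed.

Theorem lemma7 (R : realType) (A : 'M[int]_2) (hA : \det A = 1)
  (P : set (Mspace R A)) (hP : spine P) (t : R) (gamma : R -> Mspace R A) :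
  loop_in (@fiber R A t) gamma -> ~ null_homotopic_in (@fiber R A t) gamma ->
  exists2 u, u \in `[0, 1]%R & (P `&` @fiber R A t) (gamma u).
Proof.
move=> [gc [g01 gF]] hnull.
apply: contrapT => hno.
have hnP : forall u, u \in `[0, 1]%R -> ~ P (gamma u).
  move=> u hu Pu; apply: hno; exists u => //; split => //; exact: gF u hu.
apply: hnull.
case: hP => _ [fc [gcell [fcont [gcont [fU [gf fg]]]]]].
pose del := fun u => gcell (gamma u).
have hdel : {within `[(0:R), 1]%classic, continuous del}.
  exact: (within_cont_comp gc gcont (fun u hu => hnP u hu)).
pose K := fun p : R * R => (1 - p.2) *: del p.1 + p.2 *: del 0.
have hK : {within (@unit_square R), continuous K} := @homot_cont R _ del (del 0) hdel.
pose Hm := fc \o K.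
have hHm : {within (@unit_square R), continuous Hm} := within_cont_compT hK fcont.
have [Hl [hHl1 hHl2]] := lift_square hA hHm.
have I0' : (0:R) \in `[0, 1]%R by exact: (@I0 R).
have I1' : (1:R) \in `[0, 1]%R by exact: (@I1 R).
have gE : forall u, u \in `[0, 1]%R -> fc (del u) = gamma u.
  by move=> u hu; apply: fg; exact: hnP.
have del1 : del 1 = del 0 by rewrite /del g01.
have Hm0 : forall u, u \in `[0, 1]%R -> Hm (u, 0) = gamma u.
  by move=> u hu; rewrite /Hm /K /= subr0 scale1r scale0r addr0 gE.
have Hm1 : forall u, Hm (u, 1) = gamma 0.
  by move=> u; rewrite /Hm /K /= subrr scale0r add0r scale1r gE.
have Hm2 : forall v, Hm (0, v) = gamma 0.
  by move=> v; rewrite /Hm /K /= -scalerDl subrK scale1r gE.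
have Hm3 : forall v, Hm (1, v) = gamma 0.
  by move=> v; rewrite /Hm /K /= del1 -scalerDl subrK scale1r gE.
have [d1 d10 hd1] := hHl2 1 ltr01.
have SP : forall u v, u \in `[0, 1]%R -> v \in `[0, 1]%R -> @unit_square R (u, v).
  by move=> u v hu hv; split.
have sideV : forall a, a \in `[0, 1]%R -> (forall v, v \in `[0, 1]%R -> Hm (a, v) = gamma 0) ->
    Hl (a, 1) = Hl (a, 0).
  move=> a ha hv.
  apply: (@const_path R _ (fun v => Hl (a, v))) => //.
    exists d1 => // u v hu hv' huv; apply: hd1; [exact: SP|exact: SP|].
    by rewrite pair_dist subrr normr0 max_r.
  move=> u v hu hv' huv; apply: (rel_sep hA) huv; apply/piE.
  by rewrite (hHl1 _ (SP _ _ ha hu)) (hHl1 _ (SP _ _ ha hv')) !hv.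
have e1 : Hl (0, 1) = Hl (0, 0) by apply: sideV => // v _; exact: Hm2.
have e2 : Hl (1, 1) = Hl (1, 0) by apply: sideV => // v _; exact: Hm3.
have e3 : Hl (1, 1) = Hl (0, 1).
  apply: (@const_path R _ (fun u => Hl (u, 1))) => //.
    exists d1 => // u v hu hv' huv; apply: hd1; [exact: SP|exact: SP|].
    by rewrite pair_dist subrr normr0 max_l.
  move=> u v hu hv' huv; apply: (rel_sep hA) huv; apply/piE.
  by rewrite (hHl1 _ (SP _ _ hu I1')) (hHl1 _ (SP _ _ hv' I1')) !Hm1.
have e10 : Hl (1, 0) = Hl (0, 0) by rewrite -e2 e3 e1.
have sint : forall u, u \in `[0, 1]%R -> isint ((Hl (u, 0)).2 - t).
  move=> u hu; have [z [hz [k hk]]] := gF u hu.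
  have := pi_s hA (a := z) (b := Hl (u, 0)).
  rewrite (hHl1 _ (SP _ _ hu I0')) Hm0 // hz => /(_ erefl) [k' hk'].
  by exists (k' + k); rewrite intrD -hk' hk; lra.
have sconst : forall u, u \in `[0, 1]%R -> (Hl (u, 0)).2 = (Hl (0, 0)).2.
  apply: (@const_path R R^o (fun u => (Hl (u, 0)).2)).
    exists d1 => // u v hu hv huv.
    have := hd1 _ _ (SP _ _ hu I0') (SP _ _ hv I0').
    rewrite pair_dist subrr normr0 max_l // => /(_ huv) h.
    by apply: le_lt_trans h; rewrite [X in _ <= X]prod_normE le_max lexx orbT.
  move=> u v hu hv huv; apply/eqP; rewrite -subr_eq0; apply/eqP.
  apply: isint_small huv.
  have := isintB (sint u hu) (sint v hv).
  by rewrite opprB addrA subrK.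
pose phi := fun u => Hl (u, 0).
have hphi : {within `[(0:R), 1]%classic, continuous phi}.
  apply: within_cont_norm => x hx e e0.
  have [d d0 hd] := hHl2 e e0; exists d => // y hy hxy.
  apply: hd; [exact: SP|exact: SP|].
  by rewrite pair_dist subrr normr0 max_l.
pose Kc := fun p : R * R => (1 - p.2) *: phi p.1 + p.2 *: Hl (0, 0).
have hKc : {within (@unit_square R), continuous Kc} := @homot_cont R _ phi (Hl (0, 0)) hphi.
exists (proj_M A \o Kc); split; [|split; [|split]].
- apply: within_cont_compT hKc _; exact: pi_continuous.
- move=> p [hp1 hp2]; have [k hk] := sint 0 I0'.
  exists (Kc p); split => //; exists k.
  rewrite /Kc /phi /= (sconst _ hp1) -scalerDl subrK scale1r; lra.
- move=> u hu; split.
    by rewrite /= /Kc /phi /= subr0 scale1r scale0r addr0 (hHl1 _ (SP _ _ hu I0')) Hm0.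
  by rewrite /= /Kc /phi /= subrr scale0r add0r scale1r (hHl1 _ (SP _ _ I0' I0')) Hm0.
- move=> v hv; split.
    by rewrite /= /Kc /phi /= -scalerDl subrK scale1r (hHl1 _ (SP _ _ I0' I0')) Hm0.
  by rewrite /= /Kc /phi /= e10 -scalerDl subrK scale1r (hHl1 _ (SP _ _ I0' I0')) Hm0.
Qed.
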